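(* Let $\lambda\in(\frac16,\frac56)$ and $n\ge0$. For all $x\in[0,1]\setminus\mathcal E$, $$|F^\lambda(x)-F^\lambda(a_n(x))|\ge|m_n(x)|\,|x-a_n(x)|.$$
   Context: Construction: $F^\lambda_0\equiv0$ on $[0,1]$. Given $F^\lambda_n$ with its $4^n$ closed intervals of generation $n$ (covering $[0,1]$, disjoint interiors, $F^\lambda_n$ affine on each), on each interval $[a,b]$ of generation $n$, with $\ell=b-a$ and slope $m$, $F^\lambda_{n+1}$ coincides with $F^\lambda_n$ at $a,a+\ell/3,a+2\ell/3,b$, equals $F^\lambda_n(a+\ell/2)+\lambda\ell\sqrt{1+m^2}$ at $a+\ell/2$, and is affine on $[a,a+\ell/3],[a+\ell/3,a+\ell/2],[a+\ell/2,a+2\ell/3],[a+2\ell/3,b]$. $F^\lambda=\lim_nF^\lambda_n$. Dynamics: $T(x)=3x$ on $[0,\frac13)$, $6x-2$ on $[\frac13,\frac12)$, $4-6x$ on $[\frac12,\frac23)$, $3x-2$ on $[\frac23,1]$; $U(x)=0,1,2,3$ and $\widetilde U(x)=0,\frac13,\frac23,\frac23$ on these intervals respectively; $u_n(x)=U(T^nx)$, $\widetilde u_n(x)=\widetilde U(T^nx)$; $\beta_i(x,n)=\#\{k<n:u_k(x)=i\}$, $\beta_{i,j}=\beta_i+\beta_j$; $\varepsilon_n(x)=(-1)^{\beta_2(x,n)}$, $\ell_n(x)=3^{-\beta_{0,3}(x,n)}6^{-\beta_{1,2}(x,n)}$, $a_0(x)=0$, $a_n(x)=\sum_{k=0}^{n-1}\widetilde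 u_k(x)\varepsilon_k(x)\ell_k(x)$. $\mathcal E$ is the set of $x$ whose digit sequence is eventually constantly $0$ or eventually constantly $3$; for $x\notin\mathcal E$, $m_n(x)$ is the slope of $F^\lambda_n$ at $x$. *)

(* Defs.v *)
From Stdlib Require Import Reals Lra.
From Coquelicot Require Import Coquelicot.
Open Scope R_scope.

Definition T (x : R) : R :=
  if Rlt_dec x (1/3) then 3 * x
  else if Rlt_dec x (1/2) then 6 * x - 2
  else if Rlt_dec x (2/3) then 4 - 6 * x
  else 3 * x - 2.

Definition U (x : R) : nat :=
  if Rlt_dec x (1/3) then 0%nat
  else if Rlt_dec x (1/2) then 1%nat
  else if Rlt_dec x (2/3) then 2%nat
  else 3%nat.

Definition Ut (x : R) : R :=
  if Rlt_dec x (1/3) then 0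
  else if Rlt_dec x (1/2) then 1/3
  else if Rlt_dec x (2/3) then 2/3
  else 2/3.

Fixpoint Titer (n : nat) (x : R) : R :=
  match n with O => x | S k => T (Titer k x) end.

Definition u (n : nat) (x : R) : nat := U (Titer n x).
Definition ut (n : nat) (x : R) : R := Ut (Titer n x).

Fixpoint beta (i : nat) (x : R) (n : nat) : nat :=
  match n with
  | O => O
  | S k => (beta i x k + (if Nat.eqb (u k x) i then 1 else 0))%nat
  end.

Definition beta2 (i j : nat) (x : R) (n : nat) : nat := (beta i x n + beta j x n)%nat.

Definition eps (n : nat) (x : R) : R := (-1) ^ (beta 2 x n).

Definition ell (n : nat) (x : R) : R :=
  / (3 ^ (beta2 0 3 x n)) * / (6 ^ (beta2 1 2 x n)).

Fixpoint a (n : nat) (x : R) : R :=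
  match n with
  | O => 0
  | S k => a k x + ut k x * eps k x * ell k x
  end.

Definition inE (x : R) : Prop :=
  (exists N, forall k, (N <= k)%nat -> u k x = 0%nat) \/
  (exists N, forall k, (N <= k)%nat -> u k x = 3%nat).

(* cell n x = (left endpoint, length) of the closed interval of generation n
   containing x: generation 0 is [0,1], and each interval [a,a+l] of
   generation n is split into [a,a+l/3], [a+l/3,a+l/2], [a+l/2,a+2l/3],
   [a+2l/3,a+l].  (At common endpoints we use a half-open convention; this is
   irrelevant for the values of F_n, which agree there.) *)
Fixpoint cell (n : nat) (x : R) : R * R :=
  match n with
  | O => (0, 1)
  | S k =>
      let (a0, l) := cell k x in
      if Rlt_dec x (a0 + l/3) then (a0, l/3)
      else if Rlt_dec x (a0 + l/2) then (a0 + l/3, l/6)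
      else if Rlt_dec x (a0 + 2*l/3) then (a0 + l/2, l/6)
      else (a0 + 2*l/3, l/3)
  end.

Definition lin (p q vp vq x : R) : R := vp + (vq - vp) / (q - p) * (x - p).

Fixpoint Fn (lam : R) (n : nat) : R -> R :=
  match n with
  | O => fun _ => 0
  | S k => fun x =>
      let f := Fn lam k in
      let (a0, l) := cell k x in
      let m := (f (a0 + l) - f a0) / l in
      let p0 := a0 in let p1 := a0 + l/3 in let p2 := a0 + l/2 in
      let p3 := a0 + 2*l/3 in let p4 := a0 + l in
      let v0 := f p0 in let v1 := f p1 in
      let v2 := f p2 + lam * l * sqrt (1 + m^2) in
      let v3 := f p3 in let v4 := f p4 in
      if Rlt_dec x p1 then lin p0 p1 v0 v1 x
      else if Rlt_dec x p2 then lin p1 p2 v1 v2 x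
      else if Rlt_dec x p3 then lin p2 p3 v2 v3 x
      else lin p3 p4 v3 v4 x
  end.

Definition F (lam x : R) : R := real (Lim_seq (fun n => Fn lam n x)).

(* m_n(x): the slope of F^lambda_n on the generation-n interval containing x
   (well defined for x not in E, which is never an endpoint of such an interval) *)
Definition slope (lam : R) (n : nat) (x : R) : R :=
  let (a0, l) := cell n x in (Fn lam n (a0 + l) - Fn lam n a0) / l.

(* Main.v *)
Require Import Defs.
From Stdlib Require Import Reals Lra Lia.
From Coquelicot Require Import Coquelicot.
Require Import Defs.
Open Scope R_scope.

Lemma cell_S n y c l : cell n y = (c,l) ->
  cell (S n) y =
      if Rlt_dec y (c + l/3) then (c, l/3)
      else if Rlt_dec y (c + l/2) then (c + l/3, l/6)
      else if Rlt_dec y (c + 2*l/3) then (c + l/2, l/6)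
      else (c + 2*l/3, l/3).
Proof. intros H. cbn [cell]. rewrite H. reflexivity. Qed.

Lemma cell_bounds n y : 0 <= y < 1 ->
  0 <= fst (cell n y) /\ 0 < snd (cell n y) /\
  fst (cell n y) <= y < fst (cell n y) + snd (cell n y) /\
  fst (cell n y) + snd (cell n y) <= 1.
Proof.
  intros Hy. induction n as [|n IH].
  - simpl. lra.
  - destruct (cell n y) as [c l] eqn:E. simpl in IH.
    rewrite (cell_S n y c l E).
    destruct (Rlt_dec y (c + l/3)); [simpl; lra|].
    destruct (Rlt_dec y (c + l/2)); [simpl; lra|].
    destruct (Rlt_dec y (c + 2*l/3)); simpl; lra.
Qed.

Lemma cell_same n y z c l : 0 <= y < 1 -> cell n y = (c,l) -> c <= z < c + l ->
  cell n z = (c,l).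
Proof.
  revert c l. induction n as [|n IH]; intros c l Hy E Hz.
  - simpl in *. exact E.
  - destruct (cell n y) as [c0 l0] eqn:E0.
    pose proof (cell_bounds n y Hy) as B. rewrite E0 in B. simpl in B.
    rewrite (cell_S n y c0 l0 E0) in E.
    assert (Hz0 : c0 <= z < c0 + l0).
    { destruct (Rlt_dec y (c0 + l0/3)); [injection E; intros; subst; lra|].
      destruct (Rlt_dec y (c0 + l0/2)); [injection E; intros; subst; lra|].
      destruct (Rlt_dec y (c0 + 2*l0/3)); injection E; intros; subst; lra. }
    rewrite (cell_S n z c0 l0 (IH c0 l0 Hy eq_refl Hz0)).
    destruct (Rlt_dec y (c0 + l0/3)); destruct (Rlt_dec z (c0 + l0/3));
    try (injection E; intros; subst; lra);
    destruct (Rlt_dec y (c0 + l0/2)); destruct (Rlt_dec z (c0 + l0/2));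
    try (injection E; intros; subst; lra);
    destruct (Rlt_dec y (c0 + 2*l0/3)); destruct (Rlt_dec z (c0 + 2*l0/3));
    try (injection E; intros; subst; lra); exact E.
Qed.

Lemma cell_one n : fst (cell n 1) + snd (cell n 1) = 1 /\ 0 < snd (cell n 1).
Proof.
  induction n as [|n IH].
  - simpl. lra.
  - destruct (cell n 1) as [c l] eqn:E. simpl in IH.
    rewrite (cell_S n 1 c l E).
    destruct (Rlt_dec 1 (c + l/3)); [lra|].
    destruct (Rlt_dec 1 (c + l/2)); [lra|].
    destruct (Rlt_dec 1 (c + 2*l/3)); [lra|]. simpl. lra.
Qed.

Lemma cell_left_self n y c l : 0 <= y < 1 -> cell n y = (c,l) -> cell n c = (c,l).
Proof.
  intros Hy E. pose proof (cell_bounds n y Hy) as B. rewrite E in B; simpl in B.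
  apply (cell_same n y c c l Hy E). lra.
Qed.

Lemma cell_right_end n y c l : 0 <= y < 1 -> cell n y = (c,l) -> c + l < 1 ->
  fst (cell n (c + l)) = c + l.
Proof.
  revert y c l. induction n as [|n IH]; intros y c l Hy E Hl.
  - simpl in E. injection E as <- <-. lra.
  - destruct (cell n y) as [c0 l0] eqn:E0.
    pose proof (cell_bounds n y Hy) as B. rewrite E0 in B. simpl in B.
    rewrite (cell_S n y c0 l0 E0) in E.
    assert (Hin : forall z, c0 <= z < c0 + l0 -> cell n z = (c0,l0))
      by (intros; eapply cell_same; eauto).
    destruct (Rlt_dec y (c0 + l0/3)).
    { injection E as <- <-.
      rewrite (cell_S n (c0 + l0/3) c0 l0 (Hin (c0 + l0/3) ltac:(lra))).
      destruct (Rlt_dec (c0 + l0/3) (c0 + l0/3)); [lra|].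
      destruct (Rlt_dec (c0 + l0/3) (c0 + l0/2)); [simpl; lra| lra]. }
    destruct (Rlt_dec y (c0 + l0/2)).
    { injection E as <- <-.
      rewrite (cell_S n (c0 + l0/3 + l0/6) c0 l0 (Hin (c0 + l0/3 + l0/6) ltac:(lra))).
      destruct (Rlt_dec (c0 + l0/3 + l0/6) (c0 + l0/3)); [lra|].
      destruct (Rlt_dec (c0 + l0/3 + l0/6) (c0 + l0/2)); [lra|].
      destruct (Rlt_dec (c0 + l0/3 + l0/6) (c0 + 2*l0/3)); [simpl; lra| lra]. }
    destruct (Rlt_dec y (c0 + 2*l0/3)).
    { injection E as <- <-.
      rewrite (cell_S n (c0 + l0/2 + l0/6) c0 l0 (Hin (c0 + l0/2 + l0/6) ltac:(lra))).
      destruct (Rlt_dec (c0 + l0/2 + l0/6) (c0 + l0/3)); [lra|].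
      destruct (Rlt_dec (c0 + l0/2 + l0/6) (c0 + l0/2)); [lra|].
      destruct (Rlt_dec (c0 + l0/2 + l0/6) (c0 + 2*l0/3)); [lra|]. simpl; lra. }
    injection E as <- <-.
    assert (Hc : c0 + 2*l0/3 + l0/3 = c0 + l0) by field. rewrite Hc in *.
    pose proof (IH y c0 l0 Hy E0 Hl) as H1.
    destruct (cell n (c0 + l0)) as [c1 l1] eqn:E1. simpl in H1. subst c1.
    pose proof (cell_bounds n (c0+l0) ltac:(lra)) as B1. rewrite E1 in B1; simpl in B1.
    rewrite (cell_S n _ _ _ E1).
    destruct (Rlt_dec (c0 + l0) (c0 + l0 + l1/3)); [reflexivity| lra].
Qed.


Lemma lin_p p q vp vq x : x = p -> lin p q vp vq x = vp.
Proof. intros ->. unfold lin. ring. Qed.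
Lemma lin_q p q vp vq x : x = q -> p <> q -> lin p q vp vq x = vq.
Proof. intros -> H. unfold lin. field. lra. Qed.

Section L.
Variable lam : R.

Definition hb n c l := lam * l * sqrt (1 + ((Fn lam n (c + l) - Fn lam n c) / l) ^ 2).

Lemma Fn_S n z c l : cell n z = (c,l) -> Fn lam (S n) z =
  if Rlt_dec z (c + l / 3)
   then lin c (c + l / 3) (Fn lam n c) (Fn lam n (c + l / 3)) z
   else
    if Rlt_dec z (c + l / 2)
    then lin (c + l / 3) (c + l / 2) (Fn lam n (c + l / 3))
       (Fn lam n (c + l / 2) + hb n c l) z
    else
     if Rlt_dec z (c + 2 * l / 3)
     then lin (c + l / 2) (c + 2 * l / 3) (Fn lam n (c + l / 2) + hb n c l)
        (Fn lam n (c + 2 * l / 3)) z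
     else lin (c + 2 * l / 3) (c + l) (Fn lam n (c + 2 * l / 3)) (Fn lam n (c + l)) z.
Proof. intros H. cbn [Fn]. rewrite H. reflexivity. Qed.

Lemma Fn_left n z : 0 <= z < 1 -> fst (cell n z) = z -> Fn lam (S n) z = Fn lam n z.
Proof.
  intros Hz H. destruct (cell n z) as [c l] eqn:E. simpl in H. subst c.
  pose proof (cell_bounds n z Hz) as B. rewrite E in B; simpl in B.
  rewrite (Fn_S n z z l E).
  destruct (Rlt_dec z (z + l/3)); [|lra]. apply lin_p; reflexivity.
Qed.

Lemma Fn_one n : Fn lam (S n) 1 = Fn lam n 1.
Proof.
  pose proof (cell_one n) as [H1 H2].
  destruct (cell n 1) as [c l] eqn:E. simpl in H1, H2.
  rewrite (Fn_S n 1 c l E).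
  destruct (Rlt_dec 1 (c + l/3)); [lra|].
  destruct (Rlt_dec 1 (c + l/2)); [lra|].
  destruct (Rlt_dec 1 (c + 2*l/3)); [lra|].
  rewrite lin_q; try lra. f_equal. lra.
Qed.

Lemma left_persist n z : 0 <= z < 1 -> fst (cell n z) = z -> fst (cell (S n) z) = z.
Proof.
  intros Hz H. destruct (cell n z) as [c l] eqn:E. simpl in H. subst c.
  pose proof (cell_bounds n z Hz) as B. rewrite E in B; simpl in B.
  rewrite (cell_S n z z l E).
  destruct (Rlt_dec z (z + l/3)); [reflexivity|lra].
Qed.

Lemma left_persist_iter n z : 0 <= z < 1 -> fst (cell n z) = z ->
  forall j, fst (cell (j + n) z) = z.
Proof.
  intros Hz H j. induction j as [|j IH]; [exact H|].
  change (S j + n)%nat with (S (j + n)). apply left_persist; auto.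
Qed.

Lemma Fn_fixed n z : (z = 1 \/ (0 <= z < 1 /\ fst (cell n z) = z)) ->
  forall j, Fn lam (j + n) z = Fn lam n z.
Proof.
  intros H j. induction j as [|j IH]; [reflexivity|].
  change (S j + n)%nat with (S (j + n)). rewrite <- IH.
  destruct H as [-> | [Hz H]].
  - apply Fn_one.
  - apply Fn_left; auto. apply left_persist_iter; auto.
Qed.

Lemma Fn_right n y c l : 0 <= y < 1 -> cell n y = (c,l) ->
  Fn lam (S n) (c + l) = Fn lam n (c + l).
Proof.
  intros Hy E. pose proof (cell_bounds n y Hy) as B. rewrite E in B; simpl in B.
  destruct (Req_dec (c + l) 1) as [H1|H1].
  - pose proof (Fn_fixed n (c+l) (or_introl H1) 1) as H. exact H.
  - assert (H2 : 0 <= c + l < 1) by lra.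
    assert (H3 : c + l < 1) by lra.
    pose proof (Fn_fixed n (c+l) (or_intror (conj H2 (cell_right_end n y c l Hy E H3))) 1) as H.
    exact H.
Qed.

Lemma NV n y c l : 0 <= y < 1 -> cell n y = (c,l) ->
  Fn lam (S n) c = Fn lam n c /\
  Fn lam (S n) (c + l/3) = Fn lam n (c + l/3) /\
  Fn lam (S n) (c + l/2) = Fn lam n (c + l/2) + hb n c l /\
  Fn lam (S n) (c + 2*l/3) = Fn lam n (c + 2*l/3) /\
  Fn lam (S n) (c + l) = Fn lam n (c + l).
Proof.
  intros Hy E. pose proof (cell_bounds n y Hy) as B. rewrite E in B; simpl in B.
  assert (Hin : forall z, c <= z < c + l -> cell n z = (c,l))
      by (intros; eapply cell_same; eauto).
  split; [|split; [|split; [|split]]].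
  - rewrite (Fn_S n c c l (Hin c ltac:(lra))).
    destruct (Rlt_dec c (c + l/3)); [|lra]. apply lin_p; reflexivity.
  - rewrite (Fn_S n (c + l/3) c l (Hin (c + l/3) ltac:(lra))).
    destruct (Rlt_dec (c + l/3) (c + l/3)); [lra|].
    destruct (Rlt_dec (c + l/3) (c + l/2)); [|lra]. apply lin_p; reflexivity.
  - rewrite (Fn_S n (c + l/2) c l (Hin (c + l/2) ltac:(lra))).
    destruct (Rlt_dec (c + l/2) (c + l/3)); [lra|].
    destruct (Rlt_dec (c + l/2) (c + l/2)); [lra|].
    destruct (Rlt_dec (c + l/2) (c + 2*l/3)); [|lra]. apply lin_p; reflexivity.
  - rewrite (Fn_S n (c + 2*l/3) c l (Hin (c + 2*l/3) ltac:(lra))).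
    destruct (Rlt_dec (c + 2*l/3) (c + l/3)); [lra|].
    destruct (Rlt_dec (c + 2*l/3) (c + l/2)); [lra|].
    destruct (Rlt_dec (c + 2*l/3) (c + 2*l/3)); [lra|]. apply lin_p; reflexivity.
  - eapply Fn_right; eauto.
Qed.

Lemma Q n y c l : 0 <= y < 1 -> cell n y = (c,l) ->
  Fn lam n y = lin c (c + l) (Fn lam n c) (Fn lam n (c + l)) y.
Proof.
  destruct n as [|n]; intros Hy E.
  - simpl in E. injection E as <- <-. simpl. unfold lin. field.
  - destruct (cell n y) as [c0 l0] eqn:E0.
    pose proof (cell_bounds n y Hy) as B. rewrite E0 in B; simpl in B.
    destruct (NV n y c0 l0 Hy E0) as (N0 & N1 & N2 & N3 & N4).
    rewrite (cell_S n y c0 l0 E0) in E.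
    rewrite (Fn_S n y c0 l0 E0).
    destruct (Rlt_dec y (c0 + l0/3)).
    { injection E as <- <-. rewrite N0, N1. reflexivity. }
    destruct (Rlt_dec y (c0 + l0/2)).
    { injection E as <- <-. replace (c0 + l0/3 + l0/6) with (c0 + l0/2) by field.
      rewrite N1, N2. reflexivity. }
    destruct (Rlt_dec y (c0 + 2*l0/3)).
    { injection E as <- <-. replace (c0 + l0/2 + l0/6) with (c0 + 2*l0/3) by field.
      rewrite N2, N3. reflexivity. }
    injection E as <- <-. replace (c0 + 2*l0/3 + l0/3) with (c0 + l0) by field.
    rewrite N3, N4. reflexivity.
Qed.

End L.


Lemma lin_aff p q A m c h1 h2 y : p < q ->
  lin p q (A + m*(p-c) + h1) (A + m*(q-c) + h2) y =
  A + m*(y-c) + (h1 + (h2-h1)*((y-p)/(q-p))).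
Proof. intros. unfold lin. field. lra. Qed.

Lemma t01 p q y : p < q -> p <= y <= q -> 0 <= (y-p)/(q-p) <= 1.
Proof.
  intros H1 H2. set (t := (y-p)/(q-p)).
  assert (t*(q-p) = y-p) by (unfold t; field; lra). nra.
Qed.

Lemma slope_eq lam n y c l : cell n y = (c,l) ->
  slope lam n y = (Fn lam n (c + l) - Fn lam n c) / l.
Proof. intros E. unfold slope. rewrite E. reflexivity. Qed.

Section L.
Variable lam : R.
Hypothesis lam_pos : 0 < lam.

Lemma step n y c l : 0 <= y < 1 -> cell n y = (c,l) ->
  let m := slope lam n y in let r := sqrt (1 + m^2) in
  (0 <= Fn lam (S n) y - Fn lam n y <= lam * l * r) /\
  ((y < c + l/3 /\ cell (S n) y = (c, l/3) /\ slope lam (S n) y = m) \/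
   (c + l/3 <= y < c + l/2 /\ cell (S n) y = (c + l/3, l/6) /\ slope lam (S n) y = m + 6*lam*r) \/
   (c + l/2 <= y < c + 2*l/3 /\ cell (S n) y = (c + l/2, l/6) /\ slope lam (S n) y = m - 6*lam*r) \/
   (c + 2*l/3 <= y /\ cell (S n) y = (c + 2*l/3, l/3) /\ slope lam (S n) y = m)).
Proof.
  intros Hy E m r.
  pose proof (cell_bounds n y Hy) as B. rewrite E in B; simpl in B.
  assert (Hin : forall z, c <= z < c + l -> cell n z = (c,l))
      by (intros; eapply cell_same; eauto).
  assert (Hm : m = (Fn lam n (c + l) - Fn lam n c) / l) by (apply slope_eq; auto).
  set (A := Fn lam n c) in *.
  assert (HL : forall z, c <= z < c + l -> Fn lam n z = A + m * (z - c)).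
  { intros z Hz. rewrite (Q lam n z c l ltac:(lra) (Hin z Hz)). unfold lin. rewrite Hm.
    unfold A. field. lra. }
  assert (HB : Fn lam n (c + l) = A + m * (c + l - c)).
  { rewrite Hm. field. lra. }
  assert (Hh : hb lam n c l = lam * l * r).
  { unfold hb, r. fold A. rewrite <- Hm. reflexivity. }
  assert (Hr : 0 <= r) by apply sqrt_pos.
  assert (Hh0 : 0 <= lam * l * r) by (apply Rmult_le_pos; nra).
  destruct (NV lam n y c l Hy E) as (N0 & N1 & N2 & N3 & N4).
  rewrite (HL (c + l/3) ltac:(lra)) in N1.
  rewrite (HL (c + l/2) ltac:(lra)) in N2.
  rewrite (HL (c + 2*l/3) ltac:(lra)) in N3.
  rewrite HB in N4. fold A in N0. rewrite Hh in N2.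
  pose proof (HL y ltac:(lra)) as Hy0.
  pose proof (cell_S n y c l E) as Hc. pose proof (Fn_S lam n y c l E) as HF.
  rewrite (HL (c + l/3) ltac:(lra)), (HL (c + l/2) ltac:(lra)),
    (HL (c + 2*l/3) ltac:(lra)), HB, Hh in HF. fold A in HF.
  revert Hc HF.
  destruct (Rlt_dec y (c + l/3)) as [h1|h1]; [intros Hc HF|].
  { split.
    - assert (Heq : Fn lam (S n) y - Fn lam n y = 0 + (0 - 0) * ((y - c)/(c + l/3 - c)))
        by (rewrite HF, Hy0; unfold lin; field; lra).
      pose proof (t01 c (c + l/3) y ltac:(lra) ltac:(lra)).
      set (t := (y - c)/(c + l/3 - c)) in *. rewrite Heq. split; nra.
    - left. split; [lra|]. split; [exact Hc|].
      rewrite (slope_eq lam (S n) y c (l/3) Hc), N0, N1. fold m. field. lra. }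
  destruct (Rlt_dec y (c + l/2)) as [h2|h2]; [intros Hc HF|].
  { split.
    - assert (Heq : Fn lam (S n) y - Fn lam n y = 0 + (lam*l*r - 0) * ((y - (c + l/3))/(c + l/2 - (c + l/3))))
        by (rewrite HF, Hy0; unfold lin; field; lra).
      pose proof (t01 (c + l/3) (c + l/2) y ltac:(lra) ltac:(lra)).
      set (t := (y - (c + l/3))/(c + l/2 - (c + l/3))) in *. rewrite Heq. split; nra.
    - right; left. split; [lra|]. split; [exact Hc|].
      rewrite (slope_eq lam (S n) y _ _ Hc).
      replace (c + l/3 + l/6) with (c + l/2) by field. rewrite N1, N2. field. lra. }
  destruct (Rlt_dec y (c + 2*l/3)) as [h3|h3]; [intros Hc HF|].
  { split.
    - assert (Heq : Fn lam (S n) y - Fn lam n y = lam*l*r + (0 - lam*l*r) * ((y - (c + l/2))/(c + 2*l/3 - (c + l/2))))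
        by (rewrite HF, Hy0; unfold lin; field; lra).
      pose proof (t01 (c + l/2) (c + 2*l/3) y ltac:(lra) ltac:(lra)).
      set (t := (y - (c + l/2))/(c + 2*l/3 - (c + l/2))) in *. rewrite Heq. split; nra.
    - right; right; left. split; [lra|]. split; [exact Hc|].
      rewrite (slope_eq lam (S n) y _ _ Hc).
      replace (c + l/2 + l/6) with (c + 2*l/3) by field. rewrite N2, N3. field. lra. }
  intros Hc HF. split.
  - assert (Heq : Fn lam (S n) y - Fn lam n y = 0 + (0 - 0) * ((y - (c + 2*l/3))/(c + l - (c + 2*l/3))))
        by (rewrite HF, Hy0; unfold lin; field; lra).
    pose proof (t01 (c + 2*l/3) (c + l) y ltac:(lra) ltac:(lra)).
    set (t := (y - (c + 2*l/3))/(c + l - (c + 2*l/3))) in *. rewrite Heq. split; nra.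
  - right; right; right. split; [lra|]. split; [exact Hc|].
    rewrite (slope_eq lam (S n) y _ _ Hc).
    replace (c + 2*l/3 + l/3) with (c + l) by field. rewrite N3, N4. field. lra.
Qed.
End L.


Lemma dyn_S n x d : (d <= 3)%nat -> u n x = d ->
  eps (S n) x = (if Nat.eqb d 2 then -1 else 1) * eps n x /\
  ell (S n) x = ell n x * (if orb (Nat.eqb d 1) (Nat.eqb d 2) then 1/6 else 1/3).
Proof.
  intros Hd H. unfold eps, ell, beta2. cbn [beta]. rewrite H.
  destruct d as [|[|[|[|d]]]]; try lia; cbn [Nat.eqb orb]; rewrite ?Nat.add_0_r;
  rewrite ?pow_add; simpl; split; try ring.
  all: field; repeat split; apply pow_nonzero; lra.
Qed.

Lemma digit_cases t : t <> 1/3 -> t <> 1/2 -> t <> 2/3 ->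
  (t < 1/3 /\ U t = 0%nat /\ Ut t = 0 /\ T t = 3*t) \/
  (1/3 < t < 1/2 /\ U t = 1%nat /\ Ut t = 1/3 /\ T t = 6*t - 2) \/
  (1/2 < t < 2/3 /\ U t = 2%nat /\ Ut t = 2/3 /\ T t = 4 - 6*t) \/
  (2/3 < t /\ U t = 3%nat /\ Ut t = 2/3 /\ T t = 3*t - 2).
Proof.
  intros H1 H2 H3. unfold U, Ut, T.
  destruct (Rlt_dec t (1/3)); [left; auto|].
  destruct (Rlt_dec t (1/2)); [right; left; repeat split; auto; lra|].
  destruct (Rlt_dec t (2/3)); [right; right; left; repeat split; auto; lra|].
  right; right; right; repeat split; auto; lra.
Qed.

Lemma U_le3 t : (U t <= 3)%nat.
Proof. unfold U. repeat destruct Rlt_dec; lia. Qed.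

Lemma Titer_zero x n : Titer n x = 0 -> forall k, (n <= k)%nat -> Titer k x = 0.
Proof.
  intros H k Hk. induction k as [|k IH].
  - assert (n = 0%nat) by lia. subst. exact H.
  - destruct (Nat.eq_dec n (S k)) as [->|Hne]; [exact H|].
    simpl. rewrite IH by lia. unfold T. destruct Rlt_dec; lra.
Qed.

Lemma Titer_one x n : Titer n x = 1 -> forall k, (n <= k)%nat -> Titer k x = 1.
Proof.
  intros H k Hk. induction k as [|k IH].
  - assert (n = 0%nat) by lia. subst. exact H.
  - destruct (Nat.eq_dec n (S k)) as [->|Hne]; [exact H|].
    simpl. rewrite IH by lia. unfold T. repeat destruct Rlt_dec; lra.
Qed.

Lemma U0 : U 0 = 0%nat. Proof. unfold U. destruct Rlt_dec; [reflexivity|lra]. Qed.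
Lemma U1 : U 1 = 3%nat. Proof. unfold U. repeat destruct Rlt_dec; try lra; reflexivity. Qed.

Lemma notE_bd x : ~ inE x -> forall n, Titer n x <> 1/3 /\ Titer n x <> 1/2 /\ Titer n x <> 2/3.
Proof.
  intros HE n.
  assert (Z : Titer (S n) x = 0 -> False).
  { intros H. apply HE. left. exists (S n). intros k Hk. unfold u.
    rewrite (Titer_zero x (S n) H k Hk). apply U0. }
  assert (O : Titer (S n) x = 1 -> False).
  { intros H. apply HE. right. exists (S n). intros k Hk. unfold u.
    rewrite (Titer_one x (S n) H k Hk). apply U1. }
  simpl in Z, O.
  repeat split; intros H; rewrite H in Z, O; unfold T in Z, O;
  repeat destruct Rlt_dec; try lra.
Qed.

Lemma notE_lt1 x : ~ inE x -> x <> 1.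
Proof.
  intros HE ->. apply HE. right. exists 0%nat. intros k _. unfold u.
  rewrite (Titer_one 1 0 eq_refl k ltac:(lia)). apply U1.
Qed.


Lemma r_gt m : m < sqrt (1 + m^2) /\ - m < sqrt (1 + m^2).
Proof.
  pose proof (sqrt_pos (1 + m^2)). pose proof (sqrt_sqrt (1 + m^2) ltac:(nra)).
  split; nra.
Qed.

Lemma sq_bound m k : 0 <= k ->
  sqrt (1 + (m + k * sqrt (1 + m^2))^2) <= (1 + k) * sqrt (1 + m^2) /\
  sqrt (1 + (m - k * sqrt (1 + m^2))^2) <= (1 + k) * sqrt (1 + m^2).
Proof.
  intros Hk. pose proof (r_gt m) as [H1 H2].
  pose proof (sqrt_pos (1 + m^2)). pose proof (sqrt_sqrt (1 + m^2) ltac:(nra)).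
  set (r := sqrt (1 + m^2)) in *.
  assert (0 <= k * r * (r - m)) by (apply Rmult_le_pos; [apply Rmult_le_pos|]; lra).
  assert (0 <= k * r * (r + m)) by (apply Rmult_le_pos; [apply Rmult_le_pos|]; lra).
  split; rewrite <- (sqrt_pow2 ((1 + k) * r)) by nra; apply sqrt_le_1_alt; nra.
Qed.

Section L.
Variable lam : R.
Hypothesis Hlam : 1/6 < lam < 5/6.
Let q := (1 + 6*lam)/6.

Lemma slope0 y : slope lam 0 y = 0.
Proof. unfold slope. simpl. field. Qed.

Lemma chord n y : 0 <= y < 1 -> snd (cell n y) * sqrt (1 + (slope lam n y)^2) <= q^n.
Proof.
  intros Hy. induction n as [|n IH].
  - rewrite slope0. simpl. replace (1 + 0*(0*1)) with 1 by ring. rewrite sqrt_1. lra.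
  - destruct (cell n y) as [c l] eqn:E. cbn [snd] in IH.
    pose proof (cell_bounds n y Hy) as B. rewrite E in B; simpl in B.
    destruct (step lam ltac:(lra) n y c l Hy E) as [_ St].
    set (m := slope lam n y) in *.
    pose proof (sqrt_pos (1 + m^2)).
    destruct (sq_bound m (6*lam) ltac:(lra)) as [S1 S2].
    set (r := sqrt (1 + m^2)) in *.
    assert (Hq : 0 <= q^n) by (apply pow_le; unfold q; lra).
    change (q ^ S n) with (q * q^n).
    assert (Hlr : 0 <= l * r) by nra.
    unfold q in *.
    set (Q := ((1 + 6 * lam) / 6) ^ n) in *.
    assert (K : (1 + 6 * lam) / 6 * (l * r) <= (1 + 6 * lam) / 6 * Q)
      by (apply Rmult_le_compat_l; lra).
    assert (0 <= (lam - 1/6) * (l*r)) by (apply Rmult_le_pos; lra).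
    destruct St as [(_ & Hc & Hs) | [(_ & Hc & Hs) | [(_ & Hc & Hs) | (_ & Hc & Hs)]]].
    all: rewrite Hc, Hs; simpl snd; fold r.
    - nra.
    - assert (l / 6 * sqrt (1 + (m + 6 * lam * r) ^ 2) <= l / 6 * ((1 + 6*lam) * r))
        by (apply Rmult_le_compat_l; lra). nra.
    - assert (l / 6 * sqrt (1 + (m - 6 * lam * r) ^ 2) <= l / 6 * ((1 + 6*lam) * r))
        by (apply Rmult_le_compat_l; lra). nra.
    - nra.
Qed.

Lemma Fbound n y : 0 <= y < 1 -> Fn lam n y <= lam * (1 - q^n) / (1 - q).
Proof.
  intros Hy. induction n as [|n IH].
  - simpl. unfold q. replace (1 - 1) with 0 by ring. unfold Rdiv. lra.
  - destruct (cell n y) as [c l] eqn:E.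
    destruct (step lam ltac:(lra) n y c l Hy E) as [[D1 D2] _].
    pose proof (chord n y Hy) as Ch. rewrite E in Ch. cbn [snd] in Ch.
    assert (Ch' : lam * (l * sqrt (1 + slope lam n y ^ 2)) <= lam * q^n)
      by (apply Rmult_le_compat_l; lra).
    change (q ^ S n) with (q * q^n).
    assert (Hq1 : 0 < 1 - q) by (unfold q; lra).
    assert (Heq : lam * (1 - q * q^n) / (1 - q) = lam * (1 - q^n) / (1 - q) + lam * q^n)
      by (field; lra).
    rewrite Heq. rewrite Rmult_assoc in D2. lra.
Qed.

Lemma Fbound' n y : 0 <= y < 1 -> Fn lam n y <= lam / (1 - q).
Proof.
  intros Hy. pose proof (Fbound n y Hy).
  assert (0 <= q^n) by (apply pow_le; unfold q; lra).
  assert (Hq1 : 0 < 1 - q) by (unfold q; lra).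
  assert (lam * (1 - q^n) / (1 - q) <= lam / (1 - q)).
  { unfold Rdiv. apply Rmult_le_compat_r. left; apply Rinv_0_lt_compat; lra. nra. }
  lra.
Qed.

End L.


Section L.
Variable lam : R.
Hypothesis Hlam : 1/6 < lam < 5/6.
Variable x : R.
Hypothesis Hx : 0 <= x < 1.
Hypothesis Hb : forall n, Titer n x <> 1/3 /\ Titer n x <> 1/2 /\ Titer n x <> 2/3.

Lemma inv n : forall c l, cell n x = (c,l) ->
  ell n x = l /\
  ((eps n x = 1 /\ a n x = c /\ Titer n x * l = x - c /\ 0 <= slope lam n x) \/
   (eps n x = -1 /\ a n x = c + l /\ Titer n x * l = c + l - x /\ slope lam n x <= 0)).
Proof.
  induction n as [|n IH]; intros c l E.
  - simpl in E. injection E as <- <-. split.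
    + unfold ell. simpl. rewrite Rinv_1. ring.
    + left. rewrite slope0. simpl. repeat split; lra.
  - destruct (cell n x) as [c0 l0] eqn:E0.
    pose proof (cell_bounds n x Hx) as B. rewrite E0 in B; simpl in B.
    destruct (IH c0 l0 eq_refl) as [Hell IH'].
    destruct (step lam ltac:(lra) n x c0 l0 Hx E0) as [_ St].
    set (m := slope lam n x) in *.
    pose proof (r_gt m) as [R1 R2].
    pose proof (sqrt_pos (1 + m^2)).
    set (r := sqrt (1 + m^2)) in *.
    assert (K : 0 <= (6*lam - 1) * r) by (apply Rmult_le_pos; lra).
    destruct (Hb n) as (b1 & b2 & b3).
    assert (HT : Titer (S n) x = T (Titer n x)) by reflexivity.
    assert (HA : a (S n) x = a n x + Ut (Titer n x) * eps n x * ell n x) by reflexivity.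
    assert (HU : u n x = U (Titer n x)) by reflexivity.
    set (t := Titer n x) in *.
    pose proof (dyn_S n x (U t) (U_le3 t) HU) as [Deps Dell].
    destruct (digit_cases t b1 b2 b3) as
      [(Bt & Ud & Utd & Td) | [(Bt & Ud & Utd & Td) | [(Bt & Ud & Utd & Td) | (Bt & Ud & Utd & Td)]]];
    rewrite Ud in Deps, Dell; cbn [Nat.eqb orb] in Deps, Dell;
    destruct IH' as [(He & Ha & Ht & Hs) | (He & Ha & Ht & Hs)];
    destruct St as [(Bx & Hc & Hs') | [(Bx & Hc & Hs') | [(Bx & Hc & Hs') | (Bx & Hc & Hs')]]];
    try (exfalso; nra);
    rewrite Hc in E; injection E as <- <-;
    (split; [rewrite Dell, Hell; field|]);
    rewrite HT, HA, Td, Utd, Deps, He, Hell, Ha, Hs';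
    first [ left; repeat split; [ring | field | nra | nra]
          | right; repeat split; [ring | field | nra | nra] ].
Qed.
End L.


Lemma F_end lam n z : (z = 1 \/ (0 <= z < 1 /\ fst (cell n z) = z)) -> F lam z = Fn lam n z.
Proof.
  intros H. unfold F. rewrite <- (Lim_seq_incr_n _ n).
  rewrite (Lim_seq_ext _ (fun _ => Fn lam n z)) by (intro j; apply Fn_fixed; auto).
  rewrite Lim_seq_const. reflexivity.
Qed.

Lemma F_ge lam n x : 1/6 < lam < 5/6 -> 0 <= x < 1 -> Fn lam n x <= F lam x.
Proof.
  intros Hl Hx. set (v := fun k => Fn lam k x).
  assert (Hinc : forall k, v k <= v (S k)).
  { intros k. unfold v. destruct (cell k x) as [c l] eqn:E.
    destruct (step lam ltac:(lra) k x c l Hx E) as [[D1 _] _]. lra. }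
  assert (Hex : ex_finite_lim_seq v).
  { apply (ex_finite_lim_seq_incr v (lam / (1 - (1 + 6*lam)/6))); auto.
    intros k. apply Fbound'; auto. }
  pose proof (Lim_seq_correct' v Hex) as HL.
  exact (is_lim_seq_incr_compare v _ HL Hinc n).
Qed.

Theorem proposition3p10 :
  forall (lam : R) (n : nat) (x : R),
    1/6 < lam < 5/6 ->
    0 <= x <= 1 ->
    ~ inE x ->
    Rabs (F lam x - F lam (a n x)) >= Rabs (slope lam n x) * Rabs (x - a n x).
Proof.
  intros lam n x Hl Hx1 HE.
  pose proof (notE_lt1 x HE) as Hn1.
  assert (Hx : 0 <= x < 1) by lra.
  pose proof (notE_bd x HE) as Hb.
  destruct (cell n x) as [c l] eqn:E.
  pose proof (cell_bounds n x Hx) as B. rewrite E in B; simpl in B.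
  pose proof (Q lam n x c l Hx E) as HQ.
  pose proof (slope_eq lam n x c l E) as HS.
  pose proof (F_ge lam n x Hl Hx) as HF.
  set (m := slope lam n x) in *.
  assert (HQ' : Fn lam n x = Fn lam n c + m * (x - c)).
  { rewrite HQ, HS. unfold lin. field. lra. }
  assert (HB : Fn lam n (c + l) = Fn lam n c + m * l).
  { rewrite HS. field. lra. }
  destruct (inv lam Hl x Hx Hb n c l E) as [_ [(He & Ha & Ht & Hs) | (He & Ha & Ht & Hs)]];
    rewrite Ha; fold m in Hs.
  - rewrite (F_end lam n c).
    2: { right. split; [lra|]. rewrite (cell_left_self n x c l Hx E). reflexivity. }
    rewrite (Rabs_pos_eq m Hs), (Rabs_pos_eq (x - c)) by lra.
    assert (0 <= m * (x - c)) by (apply Rmult_le_pos; lra).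
    rewrite Rabs_pos_eq by lra. lra.
  - rewrite (F_end lam n (c + l)).
    2: { destruct (Req_dec (c + l) 1) as [H1|H1]; [left; exact H1|right].
         split; [lra|]. apply (cell_right_end n x c l Hx E). lra. }
    rewrite (Rabs_left1 m Hs), (Rabs_left1 (x - (c + l))) by lra.
    assert (0 <= (- m) * (c + l - x)) by (apply Rmult_le_pos; lra).
    rewrite Rabs_pos_eq by lra. lra.
Qed.
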